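(* Let $a,b,\sigma$ be real numbers with $\sigma>0$, $0<b<1$, $b-1\le a<b$, and $\sigma<1-a+b$. Then every real solution of $$x_{n+1}=ax_n+b(b-a)x_{n-1}+\sigma\tanh(x_n-bx_{n-1}),\quad n\ge0,$$ converges to $0$.
   Context: Solutions are generated by iteration from arbitrary real initial values $x_0,x_{-1}$. *)

(* Defs.v *)
From Stdlib Require Import Reals.
Open Scope R_scope.

(* Index shift: y k = x_{k-1}, so y 0 = x_{-1}, y 1 = x_0. *)
Definition is_solution (a b sigma : R) (y : nat -> R) : Prop :=
  forall k : nat,
    y (S (S k)) = a * y (S k) + b * (b - a) * y k + sigma * tanh (y (S k) - b * y k).

(* Main.v *)
Require Import Defs.
From Coquelicot Require Import Coquelicot.
From Stdlib Require Import Reals Lra Psatz.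
Open Scope R_scope.

Lemma expN_mul t : exp t * exp (- t) = 1.
Proof. rewrite <- exp_plus. replace (t + - t) with 0 by ring. apply exp_0. Qed.

Lemma exp_ge_expN t : 0 <= t -> exp (- t) <= exp t.
Proof. intros. destruct (Req_dec t 0). subst. rewrite Ropp_0; lra.
  left; apply exp_increasing; lra. Qed.

Lemma tanh_le t : 0 <= t -> tanh t <= t.
Proof.
  intros Ht.
  set (h := fun u => u * (exp u + exp (- u)) - (exp u - exp (- u))).
  assert (Hd : forall c, Rabs (c - 0) <= t -> is_derive h c (c * (exp c - exp (- c)))).
  { intros c _. unfold h. auto_derive; auto. ring. }
  destruct (MVT_cor4 h _ 0 t Hd t) as [c [Hc Hc2]].
  { rewrite Rminus_0_r, Rabs_right; lra. }
  assert (Hpos : 0 <= c * (exp c - exp (- c))).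
  { destruct (Rle_dec 0 c).
    - apply Rmult_le_pos; auto. pose proof (exp_ge_expN c r); lra.
    - pose proof (exp_ge_expN (-c)). rewrite Ropp_involutive in H.
      assert (exp c - exp (-c) <= 0) by (apply Rle_minus; apply H; lra).
      nra. }
  assert (H0 : h 0 = 0). { unfold h. rewrite Ropp_0, exp_0. ring. }
  assert (Hh : 0 <= h t) by nra.
  unfold h in Hh. unfold tanh, sinh, cosh.
  pose proof (exp_pos t). pose proof (exp_pos (- t)).
  apply Rmult_le_reg_r with ((exp t + exp (- t))/2). lra.
  unfold Rdiv. field_simplify; lra.
Qed.

Lemma tanh_lb t M : 0 <= t <= M -> t <= (1 + 2 * M) * tanh t.
Proof.
  intros [H1 H2].
  pose proof (expN_mul t) as HEF.
  pose proof (exp_ge_expN t H1).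
  pose proof (exp_pos t). pose proof (exp_pos (- t)).
  assert (HE2 : exp t * exp t >= 1 + 2 * t).
  { rewrite <- exp_plus. pose proof (exp_ineq1_le (t + t)). lra. }
  set (E := exp t) in *. set (F := exp (- t)) in *.
  assert (HE : E >= F + 2 * t * F) by nra.
  unfold tanh, sinh, cosh. fold E F.
  replace ((E - F) / 2 / ((E + F) / 2)) with ((E - F) / (E + F)) by (field; lra).
  apply Rmult_le_reg_r with (E + F). lra.
  unfold Rdiv. rewrite Rmult_assoc, Rmult_assoc, Rinv_l by lra.
  nra.
Qed.

Lemma tanh_odd t : tanh (- t) = - tanh t.
Proof. unfold tanh, sinh, cosh. rewrite Ropp_involutive.
  pose proof (exp_pos t). pose proof (exp_pos (- t)). field. lra. Qed.

Lemma contr c s M z : -1 <= c -> 0 < s -> c + s < 1 -> 0 <= M -> Rabs z <= M ->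
  Rabs (c * z + s * tanh z) <= Rmax 0 (Rmax (c + s) (1 - s / (1 + 2 * M))) * Rabs z.
Proof.
  intros Hc Hs Hcs HM Hz.
  set (d := s / (1 + 2 * M)).
  set (q := Rmax 0 (Rmax (c + s) (1 - d))).
  assert (q1 : c + s <= q) by (unfold q; eapply Rle_trans; [apply Rmax_l|apply Rmax_r]).
  assert (q2 : 1 - d <= q) by (unfold q; eapply Rle_trans; [apply Rmax_r|apply Rmax_r]).
  assert (key : forall w, 0 <= w <= M -> Rabs (c * w + s * tanh w) <= q * w).
  { intros w [Hw0 HwM].
    pose proof (tanh_le w Hw0). pose proof (tanh_lb w M (conj Hw0 HwM)).
    assert (d * w <= s * tanh w).
    { unfold d. apply Rmult_le_reg_r with (1 + 2*M). lra.
      replace (s / (1 + 2 * M) * w * (1 + 2 * M)) with (s * w) by (field; lra).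
      nra. }
    apply Rabs_le. split.
    - assert (q * w >= (1 - d) * w) by nra. nra.
    - assert (q * w >= (c + s) * w) by nra. nra. }
  destruct (Rle_dec 0 z).
  - rewrite (Rabs_right z) by lra. apply key. rewrite Rabs_right in Hz; lra.
  - rewrite Rabs_left in Hz by lra. rewrite (Rabs_left z) by lra.
    replace (c * z + s * tanh z) with (- (c * (- z) + s * tanh (- z)))
      by (rewrite tanh_odd; ring).
    rewrite Rabs_Ropp. apply key. lra.
Qed.

Theorem mainTheorem10 (a b sigma : R) (y : nat -> R)
  (Hsigma : 0 < sigma) (Hb0 : 0 < b) (Hb1 : b < 1)
  (Ha1 : b - 1 <= a) (Ha2 : a < b) (Hs : sigma < 1 - a + b)
  (Hy : is_solution a b sigma y) :
  Un_cv y 0.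
Proof.
  set (c := a - b).
  set (z := fun k => y (S k) - b * y k).
  assert (Hz : forall k, z (S k) = c * z k + sigma * tanh (z k)).
  { intro k. unfold z, c. rewrite (Hy k). ring. }
  set (M := Rabs (z 0%nat)).
  assert (HM : 0 <= M) by apply Rabs_pos.
  set (q := Rmax 0 (Rmax (c + sigma) (1 - sigma / (1 + 2 * M)))).
  assert (q0 : 0 <= q) by apply Rmax_l.
  assert (q1 : q < 1).
  { unfold q. apply Rmax_lub_lt. lra. apply Rmax_lub_lt. unfold c; lra.
    assert (0 < sigma / (1 + 2 * M)) by (apply Rdiv_lt_0_compat; lra). lra. }
  assert (Hzb : forall n, Rabs (z n) <= q ^ n * M).
  { induction n.
    - simpl. unfold M; lra.
    - assert (Hqn : q ^ n <= 1).
      { rewrite <- (pow1 n). apply pow_incr. lra. }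
      assert (Hqn0 : 0 <= q ^ n) by (apply pow_le; lra).
      rewrite Hz. simpl.
      eapply Rle_trans.
      + apply (contr c sigma M (z n)); unfold c; try lra.
        eapply Rle_trans; [apply IHn|]. nra.
      + fold q. nra. }
  set (r := (1 + Rmax b q) / 2).
  assert (rb : b < r) by (unfold r; pose proof (Rmax_l b q); pose proof (Rmax_lub_lt b q 1 Hb1 q1); lra).
  assert (rq : q < r) by (unfold r; pose proof (Rmax_r b q); pose proof (Rmax_lub_lt b q 1 Hb1 q1); lra).
  assert (r1 : r < 1) by (unfold r; pose proof (Rmax_lub_lt b q 1 Hb1 q1); lra).
  set (A := Rmax (Rabs (y 0%nat)) (M / (r - b))).
  assert (A0 : 0 <= A) by (unfold A; eapply Rle_trans; [apply Rabs_pos|apply Rmax_l]).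
  assert (AM : M <= A * (r - b)).
  { assert (M / (r - b) <= A) by apply Rmax_r.
    apply Rmult_le_compat_r with (r := r - b) in H; [|lra].
    replace (M / (r - b) * (r - b)) with M in H by (field; lra). exact H. }
  assert (Hyb : forall k, Rabs (y k) <= A * r ^ k).
  { induction k.
    - simpl. rewrite Rmult_1_r. apply Rmax_l.
    - replace (y (S k)) with (b * y k + z k) by (unfold z; ring).
      assert (Hqr : q ^ k <= r ^ k) by (apply pow_incr; lra).
      assert (Hr0 : 0 <= r ^ k) by (apply pow_le; lra).
      eapply Rle_trans; [apply Rabs_triang|].
      rewrite Rabs_mult, (Rabs_right b) by lra.
      pose proof (Hzb k).
      assert (q ^ k * M <= r ^ k * M) by nra.
      assert (r ^ k * M <= r ^ k * (A * (r - b))) by nra.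
      simpl. nra. }
  intros eps Heps.
  destruct (pow_lt_1_zero r) with (y := eps / (A + 1)) as [N HN].
  { rewrite Rabs_right; lra. }
  { apply Rdiv_lt_0_compat; lra. }
  exists N. intros n Hn. unfold Rdist. rewrite Rminus_0_r.
  specialize (HN n Hn). pose proof (Hyb n).
  rewrite Rabs_right in HN by (apply Rle_ge, pow_le; lra).
  apply Rle_lt_trans with (A * r ^ n); auto.
  assert (A * r ^ n <= A * (eps / (A + 1))) by (apply Rmult_le_compat_l; lra).
  assert (A * (eps / (A + 1)) < eps).
  { apply Rmult_lt_reg_r with (A + 1). lra.
    replace (A * (eps / (A + 1)) * (A + 1)) with (A * eps) by (field; lra). nra. }
  lra.
Qed.
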